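(* Let $1<a_1<a_2$ be coprime integers. Then: (1) the sets $r_0^{-1}(\mathbb{Q})=\{t\in[1,\infty]: r_0(t)\in\mathbb{Q}\}$ and $\mathcal{T}=\{t\in(1,\infty): |P(t)|>\frac{1}{a_2},\ r_0(t)\in\mathbb{Q}\}$ are both countable; (2) $r_0$ is continuous; (3) for every $a>1$, $r_0^{-1}(\mathbb{Q})$ is dense in the ray $(a,\infty)$ (i.e. $(a,\infty)$ is contained in the closure of $r_0^{-1}(\mathbb{Q})$).
   Context: For $t\in[1,\infty)$ and $(u,v)\in\mathbb{R}^2$, $\|(u,v)\|_t=(|u|^t+|v|^t)^{1/t}$, and $\|(u,v)\|_\infty=\max(|u|,|v|)$. For $t\in[1,\infty]$ define $\mu_t(r)=\left\|\left(\frac{1-r}{a_1},\frac{r}{a_2}\right)\right\|_t$ for $r\in[0,1]$, $r_0(t)=\min\{r\in[0,1]:\mu_t(r)=\frac{1}{a_2}\}$ (a function $[1,\infty]\to[0,1]$), and $P(t)=\mu_t'(r_0(t))$ (derivative in $r$). *)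

(* Defs.v *)
From HB Require Import structures.
From mathcomp Require Import all_boot all_order all_algebra.
From mathcomp Require Import all_classical all_reals all_analysis.
Set Implicit Arguments. Unset Strict Implicit. Unset Printing Implicit Defensive.
Import Order.TTheory GRing.Theory Num.Theory.
Import numFieldNormedType.Exports.
Local Open Scope classical_set_scope.
Local Open Scope ring_scope.

Section Defs.
Variable R : realType.

Definition is_rat (x : R) : Prop := exists q : rat, x = ratr q.

(* mu_t(r) = || ((1-r)/a1, r/a2) ||_t for t in [1, +oo] (extended reals);
   value at t = -oo is irrelevant junk *)
Definition mu (a1 a2 : R) (t : \bar R) (r : R) : R :=
  let u := (1 - r) / a1 in
  let v := r / a2 in
  match t with
  | +oo%E => Num.max `|u| `|v|
  | (s%:E)%E => powR (powR `|u| s + powR `|v| s) s^-1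
  | -oo%E => 0
  end.

(* r0(t) = min { r in [0,1] : mu_t(r) = 1/a2 } (the set is closed and nonempty,
   so its infimum is its minimum) *)
Definition r0 (a1 a2 : R) (t : \bar R) : R :=
  inf [set r : R | 0 <= r <= 1 /\ mu a1 a2 t r = a2^-1].

Definition P (a1 a2 : R) (t : \bar R) : R :=
  derive1 (mu a1 a2 t) (r0 a1 a2 t).

End Defs.

(* Main.v *)
Require Import Defs.
From HB Require Import structures.
From mathcomp Require Import all_boot all_order all_algebra.
From mathcomp Require Import all_classical all_reals all_analysis.
From mathcomp Require Import ring lra.
Import Order.TTheory GRing.Theory Num.Theory.
Import numFieldNormedType.Exports.
Local Open Scope classical_set_scope.
Local Open Scope ring_scope.
Set Implicit Arguments. Unset Strict Implicit. Unset Printing Implicit Defensive.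

Definition XX (R : realType) (A1 A2 r : R) : R := A2 / A1 * (1 - r).
Definition SS (R : realType) (A1 A2 t r : R) : R :=
  powR `|XX A1 A2 r| t + powR `|r| t.

Lemma mu_iff (R : realType) (A1 A2 t r : R) : 0 < A1 -> 0 < A2 -> 0 < t ->
  (mu A1 A2 t%:E r = A2^-1 <-> SS A1 A2 t r = 1).
Proof.
move=> a1 a2 t0; rewrite /mu /SS /XX.
have k0 : 0 <= A2^-1 by rewrite invr_ge0 ltW.
have -> : `|(1 - r) / A1| = A2^-1 * `|A2 / A1 * (1 - r)|.
  rewrite !normrM (gtr0_norm a2) (gtr0_norm (x := A1^-1)) ?invr_gt0 //.
  by rewrite mulrA mulrA mulVf ?gt_eqF // mul1r mulrC.
have -> : `|r / A2| = A2^-1 * `|r|.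
  by rewrite normrM (gtr0_norm (x := A2^-1)) ?invr_gt0 // mulrC.
rewrite !powRM // -mulrDr powRM ?addr_ge0 ?powR_ge0 // -powRrM mulfV ?gt_eqF //.
rewrite powRr1 //.
split => [h|->]; last by rewrite powR1 mulr1.
have : powR (powR `|A2 / A1 * (1 - r)| t + powR `|r| t) t^-1 = 1.
  by apply: (mulfI (x := A2^-1)); rewrite ?invr_eq0 ?gt_eqF // mulr1.
move/eqP; rewrite powR_eq1 => /or3P [/eqP //| |].
  by rewrite ltNge addr_ge0 ?powR_ge0.
by rewrite invr_eq0 gt_eqF.
Qed.

Lemma cont_powRabs (R : realType) (t : R) : 0 < t -> continuous (fun z : R => powR `|z| t).
Proof.
move=> t0 x; have [->|x0] := eqVneq x 0.
  apply/cvgrPdist_lt => e e0.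
  rewrite normr0 powR0 ?gt_eqF // .
  apply/nbhs_ballP; exists (powR e t^-1); first by rewrite /= powR_gt0.
  move=> z; rewrite /ball /= sub0r normrN => hz.
  rewrite sub0r normrN ger0_norm ?powR_ge0 //.
  have -> : e = powR (powR e t^-1) t by rewrite -powRrM mulVf ?gt_eqF ?powRr1 // ltW.
  by apply: gt0_ltr_powR => //; rewrite nnegrE ?powR_ge0.
have h1 : {for x, continuous (fun z : R => `|z|)} by apply: norm_continuous.
have h2 : {for `|x|, continuous (@powR R ^~ t)}.
  apply: differentiable_continuous; apply/derivable1_diffP.
  by apply: derivable_powR; rewrite in_itv /= andbT normr_gt0.
exact: (continuous_comp h1 h2).
Qed.

Lemma cont_powR_exp (R : realType) (a : R) : 0 < a -> continuous (fun t : R => powR a t).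
Proof.
move=> a0; have -> : (fun t : R => powR a t) = expR \o (fun t => t * ln a).
  by apply: funext => t; rewrite /powR gt_eqF.
move=> x; apply: continuous_comp; last exact: continuous_expR.
by apply: cvgMl; exact: cvg_id.
Qed.

Lemma SS_cont (R : realType) (A1 A2 t : R) : 0 < t -> continuous (SS A1 A2 t).
Proof.
move=> t0 x; rewrite /SS; apply: cvgD; last exact: cont_powRabs.
apply: (continuous_comp (f := XX A1 A2) (g := fun z => powR `|z| t)); last exact: cont_powRabs.
rewrite /XX; apply: cvgMr; apply: cvgB; [exact: cvg_cst | exact: cvg_id].
Qed.

Lemma SSt_cont (R : realType) (A1 A2 r : R) : 0 < A1 -> 0 < A2 -> 0 < r < 1 ->
  continuous (fun t => SS A1 A2 t r).
Proof.
move=> a1 a2 /andP[r0 r1] x; rewrite /SS; apply: cvgD; apply: cont_powR_exp.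
  by rewrite normr_gt0 /XX mulf_neq0 ?subr_eq0 ?gt_eqF ?divr_gt0 // eq_sym lt_eqF.
by rewrite normr_gt0 gt_eqF.
Qed.

Lemma powR_convex (R : realType) (p l x y : R) : 1 <= p -> 0 <= l -> l <= 1 ->
  0 <= x -> 0 <= y ->
  powR (l * x + (1 - l) * y) p <= l * powR x p + (1 - l) * powR y p.
Proof.
move=> p1 l0 l1 x0 y0.
have := @convex_powR R p p1 (Itv01 l0 l1) x y.
rewrite !inE /= !in_itv /= !andbT => /(_ x0 y0).
by rewrite !convRE.
Qed.

Lemma XX_ge0 (R : realType) (A1 A2 r : R) : 0 < A1 -> 0 < A2 -> r <= 1 -> 0 <= XX A1 A2 r.
Proof. by move=> a1 a2 r1; rewrite /XX mulr_ge0 ?subr_ge0 // ltW // divr_gt0. Qed.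

Lemma SS_convex (R : realType) (A1 A2 t l a b : R) : 0 < A1 -> 0 < A2 -> 1 <= t ->
  0 <= l -> l <= 1 -> 0 <= a <= 1 -> 0 <= b <= 1 ->
  SS A1 A2 t (l * a + (1 - l) * b) <= l * SS A1 A2 t a + (1 - l) * SS A1 A2 t b.
Proof.
move=> a1 a2 t1 l0 l1 /andP[a0 a1'] /andP[b0 b1].
have m0 : 0 <= l * a + (1 - l) * b by rewrite addr_ge0 // mulr_ge0 // subr_ge0.
have m1 : l * a + (1 - l) * b <= 1 by nra.
rewrite /SS !ger0_norm ?XX_ge0 //.
have -> : XX A1 A2 (l * a + (1 - l) * b) = l * XX A1 A2 a + (1 - l) * XX A1 A2 b.
  by rewrite /XX; ring.
apply: le_trans.
  apply: lerD; first apply: powR_convex => //; try exact: XX_ge0.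
  exact: (powR_convex t1 l0 l1 a0 b0).
by lra.
Qed.

Lemma SS1 (R : realType) (A1 A2 t : R) : 0 < t -> SS A1 A2 t 1 = 1.
Proof. by move=> t0; rewrite /SS /XX subrr mulr0 normr0 powR0 ?gt_eqF // add0r normr1 powR1. Qed.

Lemma SS0 (R : realType) (A1 A2 t : R) : 0 < A1 -> A1 < A2 -> 1 <= t -> 1 < SS A1 A2 t 0.
Proof.
move=> a1 a12 t1; rewrite /SS /XX subr0 mulr1 normr0 powR0 ?gt_eqF ?(lt_le_trans ltr01) // addr0.
have c1 : 1 < A2 / A1 by rewrite ltr_pdivlMr // mul1r.
rewrite gtr0_norm ?(lt_trans ltr01) //.
by apply: (lt_le_trans c1); apply: le1r_powR => //; exact: ltW.
Qed.

Lemma SS_t1 (R : realType) (A1 A2 r : R) : 0 < A1 -> A1 < A2 -> 0 <= r -> r < 1 ->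
  1 < SS A1 A2 1 r.
Proof.
move=> a1 a12 r0 r1.
have hx : 0 <= XX A1 A2 r by apply: XX_ge0 => //; [exact: (lt_trans a1) | exact: ltW].
rewrite /SS (ger0_norm hx) (ger0_norm r0) !powRr1 //.
have c1 : 1 < A2 / A1 by rewrite ltr_pdivlMr // mul1r.
rewrite /XX; nra.
Qed.

Lemma SS_decr (R : realType) (A1 A2 r s t : R) : 0 < A1 -> 0 < A2 -> 0 < r -> r < 1 ->
  XX A1 A2 r <= 1 -> s < t -> SS A1 A2 t r < SS A1 A2 s r.
Proof.
move=> a1 a2 r0 r1 x1 st.
have x0 : 0 < XX A1 A2 r by rewrite /XX mulr_gt0 ?divr_gt0 ?subr_gt0.
rewrite /SS !gtr0_norm //.
apply: ler_ltD; first by apply: ger_powR; rewrite ?x0 ?x1 // ltW.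
rewrite /powR gt_eqF // ltr_expR ltr_nM2r //.
by rewrite ln_lt0 // r0 r1.
Qed.

Lemma SS_bern (R : realType) (A1 A2 t : R) : 0 < A1 -> A1 < A2 -> 1 < t ->
  exists q, [/\ 0 < q, q < 1 & SS A1 A2 t q < 1].
Proof.
move=> a1 a12 t1.
have a2 : 0 < A2 by exact: lt_trans a12.
have c1 : 1 < A2 / A1 by rewrite ltr_pdivlMr // mul1r.
set c := A2 / A1 in c1 *.
have c0 : 0 < c by exact: lt_trans c1.
have t10 : 0 < t - 1 by rewrite subr_gt0.
set w := powR (2 * c)^-1 (t - 1)^-1.
have k0 : 0 < (2 * c)^-1 by rewrite invr_gt0 mulr_gt0.
have k1 : (2 * c)^-1 < 1.
  rewrite invf_lt1; [lra | by rewrite mulr_gt0].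
have w0 : 0 < w by rewrite powR_gt0.
have w1 : w < 1.
  apply: (@lt_le_trans _ _ (powR 1 (t - 1)^-1)); last by rewrite powR1.
  apply: gt0_ltr_powR; rewrite ?invr_gt0 ?nnegrE ?ltW //.
have wc1 : w / c < 1 by rewrite ltr_pdivrMr // mul1r (lt_trans w1).
have wc0 : 0 < w / c by rewrite divr_gt0.
exists (1 - w / c); split; [by rewrite subr_gt0 | by rewrite ltrBlDr ltrDl |].
have hX : XX A1 A2 (1 - w / c) = w by rewrite /XX -/c opprB addrC subrK mulrC divfK ?gt_eqF.
rewrite /SS hX !gtr0_norm ?subr_gt0 //.
have e1 : powR w t = w * (2 * c)^-1.
  rewrite -(mulr_powRB1 (ltW w0) (lt_trans ltr01 t1)) /w -powRrM mulVf ?gt_eqF //.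
  by rewrite powRr1 ?ltW.
have e2 : powR (1 - w / c) t <= 1 - w / c.
  apply: ge1r_powR; last exact: ltW.
  by apply/andP; split; lra.
have e3 : w * (2 * c)^-1 = (w / c) / 2 by rewrite invfM mulrA mulrC mulrA [_ * w]mulrC.
move: e1 e2 e3; lra.
Qed.

Lemma SS_large (R : realType) (A1 A2 r : R) : 0 < A1 -> 0 < A2 -> 0 < r -> r < 1 ->
  XX A1 A2 r < 1 -> exists T, 1 <= T /\ SS A1 A2 T r < 1.
Proof.
move=> a1 a2 r0 r1 x1.
have x0 : 0 < XX A1 A2 r by rewrite /XX mulr_gt0 ?divr_gt0 ?subr_gt0.
set m := Num.max (XX A1 A2 r) r.
have m0 : 0 < m by rewrite lt_max x0.
have m1 : m < 1 by rewrite gt_max x1 r1.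
have lm : ln m < 0 by rewrite ln_lt0 // m0 m1.
set T := Num.max 1 (ln (3^-1) / ln m).
have T1 : 1 <= T by rewrite le_max lexx.
exists T; split => //.
have hT : T * ln m <= ln (3^-1).
  have : ln (3^-1) / ln m <= T by rewrite le_max lexx orbT.
  rewrite ler_ndivrMr //.
have pm : powR m T <= 3^-1.
  rewrite /powR gt_eqF // -[X in _ <= X](@lnK R); last by rewrite posrE invr_gt0.
  by rewrite ler_expR.
have T0 : 0 <= T by exact: le_trans ler01 T1.
have p1 : powR (XX A1 A2 r) T <= powR m T.
  by apply: ge0_ler_powR => //; rewrite ?nnegrE ?(ltW x0) ?(ltW m0) // /m le_max lexx.
have p2 : powR r T <= powR m T.
  by apply: ge0_ler_powR => //; rewrite ?nnegrE ?(ltW r0) ?(ltW m0) // /m le_max lexx orbT.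
rewrite /SS !gtr0_norm //.
move: p1 p2 pm; lra.
Qed.

Definition ZZ (R : realType) (A1 A2 t : R) : set R :=
  [set r | 0 <= r <= 1 /\ SS A1 A2 t r = 1].

Lemma r0E (R : realType) (A1 A2 t : R) : 0 < A1 -> 0 < A2 -> 0 < t ->
  r0 A1 A2 t%:E = inf (ZZ A1 A2 t).
Proof.
move=> a1 a2 t0; rewrite /r0 /ZZ; congr inf; apply: funext => r; apply: propext.
by split => -[h1 h2]; split => //; apply/mu_iff.
Qed.

Lemma ZZ_inf (R : realType) (A1 A2 t : R) : 1 <= t -> has_inf (ZZ A1 A2 t).
Proof.
move=> t1; split; first by exists 1; split; [rewrite ler01 lexx | apply: SS1; exact: lt_le_trans ltr01 t1].
by exists 0 => r [/andP[]].
Qed.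

Lemma inf_ZZ01 (R : realType) (A1 A2 t : R) : 1 <= t ->
  0 <= inf (ZZ A1 A2 t) <= 1.
Proof.
move=> t1; have [ne lb] := ZZ_inf A1 A2 t1.
apply/andP; split; first by apply: lb_le_inf => // r [/andP[]].
apply: ge_inf => //; split; [by rewrite ler01 lexx | apply: SS1; exact: lt_le_trans ltr01 t1].
Qed.

Lemma inf_ZZ_mem (R : realType) (A1 A2 t : R) : 0 < A1 -> 0 < A2 -> 1 <= t ->
  ZZ A1 A2 t (inf (ZZ A1 A2 t)).
Proof.
move=> a1 a2 t1; have t0 : 0 < t by exact: lt_le_trans ltr01 t1.
split; first exact: inf_ZZ01.
set I := inf _; apply/eqP/negP => /negP neq.
have d0 : 0 < `|SS A1 A2 t I - 1| by rewrite normr_gt0 subr_eq0.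
have hc : {for I, continuous (SS A1 A2 t)} by apply: SS_cont.
have /cvgrPdist_lt /(_ _ d0) := hc.
move=> /nbhs_ballP [e /= e0 He].
have [z [z01 Sz] zlt] := inf_adherent e0 (ZZ_inf A1 A2 t1).
have Iz : I <= z by apply: ge_inf => //; case: (ZZ_inf A1 A2 t1).
have := He z; rewrite /ball /= distrC ger0_norm ?subr_ge0 // ltrBlDl => /(_ zlt).
by rewrite Sz ltxx.
Qed.

Lemma IVT_SS (R : realType) (A1 A2 t a b : R) : 0 < t -> a <= b ->
  1 < SS A1 A2 t a -> SS A1 A2 t b <= 1 ->
  exists2 z, a <= z <= b & SS A1 A2 t z = 1.
Proof.
move=> t0 ab ha hb.
have hm : Num.min (SS A1 A2 t a) (SS A1 A2 t b) <= 1 <= Num.max (SS A1 A2 t a) (SS A1 A2 t b).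
  by rewrite ge_min le_max hb orbT (ltW ha).
have hc : {within `[a, b], continuous (SS A1 A2 t)}.
  by apply: continuous_subspaceT; apply: SS_cont.
have [z zin hz] := @IVT R (SS A1 A2 t) a b 1 ab hc hm.
by exists z => //; move: zin; rewrite in_itv.
Qed.

Lemma below_inf (R : realType) (A1 A2 t r : R) : 0 < A1 -> A1 < A2 -> 1 <= t ->
  0 <= r -> r < inf (ZZ A1 A2 t) -> 1 < SS A1 A2 t r.
Proof.
move=> a1 a12 t1 r0 rI; have t0 : 0 < t by exact: lt_le_trans ltr01 t1.
rewrite ltNge; apply/negP => hr.
have [z /andP[z0 zr] hz] := IVT_SS t0 r0 (SS0 a1 a12 t1) hr.
have : inf (ZZ A1 A2 t) <= z.
  apply: ge_inf; first by case: (ZZ_inf A1 A2 t1).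
  split => //; rewrite z0 /=; apply: (le_trans zr); apply: (le_trans (ltW rI)).
  by case/andP: (inf_ZZ01 A1 A2 t1).
by move=> /(le_lt_trans) /(_ (le_lt_trans zr rI)); rewrite ltxx.
Qed.

Lemma inf_lt (R : realType) (A1 A2 t q : R) : 0 < A1 -> A1 < A2 -> 1 <= t ->
  0 <= q -> q <= 1 -> SS A1 A2 t q < 1 -> inf (ZZ A1 A2 t) < q.
Proof.
move=> a1 a12 t1 q0 q1 hq; have t0 : 0 < t by exact: lt_le_trans ltr01 t1.
have [z /andP[z0 zq] hz] := IVT_SS t0 q0 (SS0 a1 a12 t1) (ltW hq).
have zq' : z < q by rewrite lt_neqAle zq andbT; apply/eqP => ezq; move: hq; rewrite -ezq hz ltxx.
apply: le_lt_trans zq'; apply: ge_inf; first by case: (ZZ_inf A1 A2 t1).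
by split => //; rewrite z0 /= (le_trans zq).
Qed.

Lemma conv_bound (R : realType) (A1 A2 t a b r : R) : 0 < A1 -> 0 < A2 -> 1 <= t ->
  0 <= a -> a < b -> b <= 1 -> a <= r -> r <= b ->
  SS A1 A2 t r <= (b - r) / (b - a) * SS A1 A2 t a + (1 - (b - r) / (b - a)) * SS A1 A2 t b.
Proof.
move=> a1 a2 t1 a0 ab b1 ar rb.
have ba : 0 < b - a by rewrite subr_gt0.
set l := (b - r) / (b - a).
have l0 : 0 <= l by rewrite divr_ge0 ?subr_ge0 // ltW.
have l1 : l <= 1 by rewrite ler_pdivrMr // mul1r; lra.
have -> : r = l * a + (1 - l) * b.
  rewrite /l; field; by rewrite gt_eqF.
have := @SS_convex R A1 A2 t l a b a1 a2 t1 l0 l1.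
rewrite a0 /= (le_trans (ltW ab) b1) (le_trans a0 (ltW ab)) b1.
by move=> /(_ isT isT).
Qed.

Lemma rr1 (R : realType) (A1 A2 : R) : 0 < A1 -> A1 < A2 -> inf (ZZ A1 A2 1) = 1.
Proof.
move=> a1 a12; have /andP[_ h1] := inf_ZZ01 A1 A2 (lexx (1:R)).
apply/eqP; rewrite eq_le h1 /=.
have [ne lb] := ZZ_inf A1 A2 (lexx (1:R)).
apply: lb_le_inf => // z [/andP[z0 z1] hz]; rewrite leNgt; apply/negP => zlt.
by move: (SS_t1 a1 a12 z0 zlt); rewrite hz ltxx.
Qed.

Lemma rr_lt1 (R : realType) (A1 A2 t : R) : 0 < A1 -> A1 < A2 -> 1 < t -> inf (ZZ A1 A2 t) < 1.
Proof.
move=> a1 a12 t1; have [q [q0 q1 hq]] := SS_bern a1 a12 t1.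
exact: lt_trans (inf_lt a1 a12 (ltW t1) (ltW q0) (ltW q1) hq) q1.
Qed.

Lemma rr_gt0 (R : realType) (A1 A2 t : R) : 0 < A1 -> A1 < A2 -> 1 <= t -> 0 < inf (ZZ A1 A2 t).
Proof.
move=> a1 a12 t1; have a2 : 0 < A2 by exact: lt_trans a12.
have [/andP[h0 _] hS] := inf_ZZ_mem a1 a2 t1.
rewrite lt_neqAle h0 andbT; apply/eqP => e.
by move: (SS0 a1 a12 t1); rewrite e hS ltxx.
Qed.

Lemma XX_lt1 (R : realType) (A1 A2 t r : R) : 0 < A1 -> 0 < A2 -> 1 <= t -> 0 < r -> r <= 1 ->
  SS A1 A2 t r = 1 -> XX A1 A2 r < 1.
Proof.
move=> a1 a2 t1 r0 r1 hS; rewrite ltNge; apply/negP => hx.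
have : 1 < SS A1 A2 t r.
  have p1 := le1r_powR hx t1.
  have p2 : 0 < powR `|r| t by rewrite powR_gt0 // normr_gt0 gt_eqF.
  rewrite /SS (ger0_norm (XX_ge0 a1 a2 r1)).
  move: p1 p2 hx; lra.
by rewrite hS ltxx.
Qed.

Lemma XX_lt1_iff (R : realType) (A1 A2 r : R) : 0 < A1 -> 0 < A2 ->
  (XX A1 A2 r < 1) = (1 - A1 / A2 < r).
Proof.
move=> a1 a2; rewrite /XX mulrAC ltr_pdivrMr // mul1r.
have -> : (1 - A1 / A2 < r) = (1 - r < A1 / A2) by apply/idP/idP => h; lra.
by rewrite ltr_pdivlMr // mulrC.
Qed.

Lemma rr_XX (R : realType) (A1 A2 t : R) : 0 < A1 -> A1 < A2 -> 1 <= t ->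
  XX A1 A2 (inf (ZZ A1 A2 t)) < 1.
Proof.
move=> a1 a12 t1; have a2 : 0 < A2 by exact: lt_trans a12.
have [/andP[h0 h1] hS] := inf_ZZ_mem a1 a2 t1.
exact: XX_lt1 a1 a2 t1 (rr_gt0 a1 a12 t1) h1 hS.
Qed.

Lemma rr_decr (R : realType) (A1 A2 s t : R) : 0 < A1 -> A1 < A2 -> 1 <= s -> s < t ->
  inf (ZZ A1 A2 t) < inf (ZZ A1 A2 s).
Proof.
move=> a1 a12 s1 st; have a2 : 0 < A2 by exact: lt_trans a12.
have t1 : 1 < t by exact: le_lt_trans s1 st.
have [->|s1'] := eqVneq s 1; first by rewrite rr1 // rr_lt1.
have s1'' : 1 < s by rewrite lt_neqAle eq_sym s1' s1.
have [/andP[h0 h1] hS] := inf_ZZ_mem a1 a2 s1.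
apply: inf_lt => //; first exact: ltW.
rewrite -hS; apply: SS_decr => //; [exact: rr_gt0 | exact: rr_lt1 | exact/ltW/rr_XX].
Qed.

Lemma rr_le (R : realType) (A1 A2 s t : R) : 0 < A1 -> A1 < A2 -> 1 <= s -> s <= t ->
  inf (ZZ A1 A2 t) <= inf (ZZ A1 A2 s).
Proof.
move=> a1 a12 s1; rewrite le_eqVlt => /predU1P[->//|st].
exact/ltW/rr_decr.
Qed.

Lemma rr_right (R : realType) (A1 A2 t0 e : R) : 0 < A1 -> A1 < A2 -> 1 <= t0 -> 0 < e ->
  \forall t \near t0, t0 <= t -> inf (ZZ A1 A2 t0) - e < inf (ZZ A1 A2 t).
Proof.
move=> a1 a12 t01 e0; have a2 : 0 < A2 by exact: lt_trans a12.
set I0 := inf (ZZ A1 A2 t0).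
have /andP[I00 I01] := inf_ZZ01 A1 A2 t01.
have [neg|pos] := ltP (I0 - e) 0.
  near=> t => tt0; have t1 : 1 <= t by exact: le_trans t01 tt0.
  have /andP[h _] := inf_ZZ01 A1 A2 t1; lra.
set r' := I0 - e / 2.
have r'0 : 0 < r' by rewrite /r'; lra.
have r'lt : r' < I0 by rewrite /r'; lra.
have r'1 : r' < 1 by lra.
have hS : 1 < SS A1 A2 t0 r' := below_inf a1 a12 t01 (ltW r'0) r'lt.
have hc : {for t0, continuous (fun t => SS A1 A2 t r')}.
  by apply: SSt_cont => //; rewrite r'0 r'1.
have hev := cvgr_gt (SS A1 A2 t0 r') hc 1 hS.
near=> t => tt0.
have hSt : 1 < SS A1 A2 t r' by near: t; exact: hev.
have t1 : 1 <= t by exact: le_trans t01 tt0.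
suff : r' <= inf (ZZ A1 A2 t) by rewrite /r'; lra.
rewrite leNgt; apply/negP => lt'.
have [/andP[It0 It1] hSI] := inf_ZZ_mem a1 a2 t1.
have := @conv_bound R A1 A2 t (inf (ZZ A1 A2 t)) 1 r' a1 a2 t1 It0 (lt_trans lt' r'1) (lexx _) (ltW lt') (ltW r'1).
rewrite hSI SS1 ?(lt_le_trans ltr01 t1) // => h.
move: h hSt; lra.
Unshelve. all: by end_near.
Qed.

Lemma rr_left (R : realType) (A1 A2 t0 e : R) : 0 < A1 -> A1 < A2 -> 1 <= t0 -> 0 < e ->
  \forall t \near t0, 1 <= t -> t < t0 -> inf (ZZ A1 A2 t) < inf (ZZ A1 A2 t0) + e.
Proof.
move=> a1 a12 t01 e0; have a2 : 0 < A2 by exact: lt_trans a12.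
have [et0|t0ne] := eqVneq t0 1.
  by near=> t => t1 tt0; move: t1 tt0; rewrite et0; lra.
have t0gt : 1 < t0 by rewrite lt_neqAle eq_sym t0ne t01.
set I0 := inf (ZZ A1 A2 t0).
have /andP[I00 I01] := inf_ZZ01 A1 A2 t01.
have [q [q0 q1 hq]] := SS_bern a1 a12 t0gt.
have Iq : I0 < q := inf_lt a1 a12 t01 (ltW q0) (ltW q1) hq.
set d := Num.min e (q - I0).
have d0 : 0 < d by rewrite lt_min e0 subr_gt0 Iq.
have de : d <= e by rewrite ge_min lexx.
have dq : d <= q - I0 by rewrite ge_min lexx orbT.
set r' := I0 + d / 2.
have r'I : I0 < r' by rewrite /r'; lra.
have r'q : r' < q by rewrite /r'; lra.
have hS : SS A1 A2 t0 r' < 1.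
  have := @conv_bound R A1 A2 t0 I0 q r' a1 a2 t01 I00 Iq (ltW q1) (ltW r'I) (ltW r'q).
  have [/andP[_ _] ->] := inf_ZZ_mem a1 a2 t01.
  set l := (q - r') / (q - I0).
  have l1 : l < 1 by rewrite /l ltr_pdivrMr ?subr_gt0 // mul1r; lra.
  move=> h; move: h hq l1; nra.
have hc : {for t0, continuous (fun t => SS A1 A2 t r')}.
  apply: SSt_cont => //; apply/andP; split; lra.
have hev := cvgr_lt (SS A1 A2 t0 r') hc 1 hS.
near=> t => t1 tt0.
have hSt : SS A1 A2 t r' < 1 by near: t; exact: hev.
have := inf_lt a1 a12 t1 (ltW (le_lt_trans I00 r'I)) (ltW (lt_trans r'q q1)) hSt.
rewrite /r'; lra.
Unshelve. all: by end_near.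
Qed.

Lemma rr_gt_rinf (R : realType) (A1 A2 t : R) : 0 < A1 -> A1 < A2 -> 1 <= t ->
  1 - A1 / A2 < inf (ZZ A1 A2 t).
Proof.
move=> a1 a12 t1; have a2 : 0 < A2 by exact: lt_trans a12.
by rewrite -XX_lt1_iff // rr_XX.
Qed.

Lemma rr_inf (R : realType) (A1 A2 e : R) : 0 < A1 -> A1 < A2 -> 0 < e ->
  exists M, 1 <= M /\ forall t, M < t -> inf (ZZ A1 A2 t) < 1 - A1 / A2 + e.
Proof.
move=> a1 a12 e0; have a2 : 0 < A2 by exact: lt_trans a12.
have k0 : 0 < A1 / A2 by rewrite divr_gt0.
have k1 : A1 / A2 < 1 by rewrite ltr_pdivrMr // mul1r.
set ri := 1 - A1 / A2.
set d := Num.min e (1 - ri).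
have d0 : 0 < d by rewrite lt_min e0 /ri; apply/andP; split => //; lra.
have de : d <= e by rewrite ge_min lexx.
have d1 : d <= 1 - ri by rewrite ge_min lexx orbT.
set r' := ri + d / 2.
have r'0 : 0 < r' by rewrite /r' /ri; lra.
have r'1 : r' < 1 by rewrite /r'; lra.
have hx : XX A1 A2 r' < 1 by rewrite XX_lt1_iff // /r' -/ri; lra.
have [T [T1 hT]] := SS_large a1 a2 r'0 r'1 hx.
exists T; split => // t Tt; have t1 : 1 <= t by exact: le_trans T1 (ltW Tt).
have hS : SS A1 A2 t r' < 1.
  by apply: lt_trans hT; apply: SS_decr => //; exact: ltW.
have := inf_lt a1 a12 t1 (ltW r'0) (ltW r'1) hS.
rewrite /r'; lra.
Qed.

Lemma r0_inf (R : realType) (A1 A2 : R) : 0 < A1 -> A1 < A2 ->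
  r0 A1 A2 +oo%E = 1 - A1 / A2.
Proof.
move=> a1 a12; have a2 : 0 < A2 by exact: lt_trans a12.
have k0 : 0 < A1 / A2 by rewrite divr_gt0.
have k1 : A1 / A2 < 1 by rewrite ltr_pdivrMr // mul1r.
rewrite /r0 /mu.
set E := [set r | _].
have lb : forall r, E r -> 1 - A1 / A2 <= r.
  move=> r [/andP[r0 r1] hm].
  have : `|(1 - r) / A1| <= A2^-1 by rewrite -hm le_max lexx.
  have hn : 0 <= (1 - r) / A1 by rewrite divr_ge0 // ?subr_ge0 // ltW.
  rewrite (ger0_norm hn) ler_pdivrMr // => h.
  have : 1 - r <= A1 / A2 by rewrite mulrC.
  lra.
have mem : E (1 - A1 / A2).
  split; first by apply/andP; split; lra.
  have -> : (1 - (1 - A1 / A2)) / A1 = A2^-1 by rewrite opprB addrC subrK mulrAC divff ?gt_eqF // mul1r.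
  have h1 : 0 <= A2^-1 by rewrite invr_ge0 ltW.
  have h2 : 0 <= (1 - A1 / A2) / A2 by rewrite divr_ge0 ?ltW //; lra.
  rewrite (ger0_norm h1) (ger0_norm h2).
  apply/max_idPl; rewrite ler_pdivrMr // mulVf ?gt_eqF //; lra.
apply/eqP; rewrite eq_le; apply/andP; split.
  have hlb : has_lbound E by exists 0 => r [/andP[]].
  exact: (ge_inf hlb mem).
by apply: lb_le_inf => //; exists (1 - A1 / A2).
Qed.

Lemma rr_near (R : realType) (A1 A2 t0 e : R) : 0 < A1 -> A1 < A2 -> 1 <= t0 -> 0 < e ->
  \forall t \near t0, 1 <= t -> `|inf (ZZ A1 A2 t0) - inf (ZZ A1 A2 t)| < e.
Proof.
move=> a1 a12 t01 e0.
have hr := rr_right a1 a12 t01 e0; have hl := rr_left a1 a12 t01 e0.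
near=> t => t1.
have [tt0|tt0] := leP t0 t.
  have h1 : inf (ZZ A1 A2 t0) - e < inf (ZZ A1 A2 t) by move: tt0; near: t; exact: hr.
  have h2 := rr_le a1 a12 t01 tt0.
  rewrite ger0_norm ?subr_ge0 //; lra.
have h1 : inf (ZZ A1 A2 t) < inf (ZZ A1 A2 t0) + e by move: t1 tt0; near: t; exact: hl.
have h2 := rr_decr a1 a12 t1 tt0.
rewrite ltr0_norm ?subr_lt0 //; lra.
Unshelve. all: by end_near.
Qed.

Lemma rr_cont (R : realType) (A1 A2 t0 : R) : 0 < A1 -> A1 < A2 -> 1 < t0 ->
  {for t0, continuous (fun t => inf (ZZ A1 A2 t))}.
Proof.
move=> a1 a12 t01; apply/cvgrPdist_lt => e e0.
have hn := rr_near a1 a12 (ltW t01) e0.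
near=> t.
have t1 : 1 <= t by apply: ltW; near: t; exact: lt_nbhsr.
by move: t1; near: t; exact: hn.
Unshelve. all: by end_near.
Qed.

Lemma r0_fin (R : realType) (A1 A2 t : R) : 0 < A1 -> A1 < A2 -> 1 <= t ->
  r0 A1 A2 t%:E = inf (ZZ A1 A2 t).
Proof.
move=> a1 a12 t1; apply: r0E => //; [exact: lt_trans a12 | exact: lt_le_trans ltr01 t1].
Qed.

Lemma r0_inj (R : realType) (A1 A2 : R) (x y : \bar R) : 0 < A1 -> A1 < A2 ->
  (1%:E <= x)%E -> (1%:E <= y)%E -> r0 A1 A2 x = r0 A1 A2 y -> x = y.
Proof.
move=> a1 a12.
have key : forall s, 1 <= s -> r0 A1 A2 +oo%E < r0 A1 A2 s%:E.
  by move=> s s1; rewrite r0_inf // r0_fin //; exact: rr_gt_rinf.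
have nN : ~ (1%:E <= (-oo : \bar R))%E by rewrite leeNy_eq.
case: x => [s| |]; case: y => [t| |] => hx hy.
- rewrite !lee_fin in hx hy; rewrite !r0_fin // => e; congr (_%:E).
  have [st|st|//] := ltgtP s t.
    by move: (rr_decr a1 a12 hx st); rewrite e ltxx.
  by move: (rr_decr a1 a12 hy st); rewrite e ltxx.
- by move=> e; move: (key s hx); rewrite -e ltxx.
- by exfalso; exact: nN hy.
- by move=> e; move: (key t hy); rewrite e ltxx.
- by move=> _; reflexivity.
- by exfalso; exact: nN hy.
- by exfalso; exact: nN hx.
- by exfalso; exact: nN hx.
- by exfalso; exact: nN hx.
Qed.

Definition r0code (R : realType) (A1 A2 : R) (x : \bar R) : nat :=
  choice.pickle (xget (0 : rat) [set q : rat | r0 A1 A2 x = ratr q]).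

Lemma code_inj (R : realType) (A1 A2 : R) (x y : \bar R) : 0 < A1 -> A1 < A2 ->
  (1%:E <= x)%E -> (1%:E <= y)%E -> is_rat (r0 A1 A2 x) -> is_rat (r0 A1 A2 y) ->
  r0code A1 A2 x = r0code A1 A2 y -> x = y.
Proof.
move=> a1 a12 x1 y1 [qx hx] [qy hy] /(pcan_inj choice.pickleK) e.
apply: (r0_inj a1 a12 x1 y1).
have ex := @xgetPex _ (0 : rat) [set q : rat | r0 A1 A2 x = ratr q] (ex_intro _ qx hx).
have ey := @xgetPex _ (0 : rat) [set q : rat | r0 A1 A2 y = ratr q] (ex_intro _ qy hy).
by rewrite ex ey e.
Qed.

Unset Implicit Arguments.

Theorem corollary1 (R : realType) (a1 a2 : nat) :
  (1 < a1)%N -> (a1 < a2)%N -> coprime a1 a2 ->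
  let A1 : R := a1%:R in
  let A2 : R := a2%:R in
  let preQ : set (\bar R) :=
    [set t : \bar R | (1%:E <= t)%E /\ is_rat (r0 A1 A2 t)] in
  (* (1) *)
  (countable preQ /\
   countable [set t : R | 1 < t /\ A2^-1 < `|P A1 A2 t%:E| /\ is_rat (r0 A1 A2 t%:E)])
  (* (2) *)
  /\ {within `[1%:E, +oo%E], continuous (r0 A1 A2)}
  (* (3) *)
  /\ (forall a : R, 1 < a ->
        forall x : R, a < x -> closure preQ x%:E).
Proof.
move=> h1 h12 _ A1 A2 preQ.
have hA1' : 1 < A1 by rewrite /A1 ltr1n.
have hA1 : 0 < A1 by exact: lt_trans ltr01 hA1'.
have hA12 : A1 < A2 by rewrite /A1 /A2 ltr_nat.
split; [split|split].
- apply/countable_injP; exists (@r0code R A1 A2) => x y /set_mem [x1 qx] /set_mem [y1 qy].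
  exact: code_inj.
- apply/countable_injP; exists (fun t => @r0code R A1 A2 t%:E).
  move=> x y /set_mem [x1 [_ qx]] /set_mem [y1 [_ qy]] e.
  have x1' : (1%:E <= x%:E)%E by rewrite lee_fin ltW.
  have y1' : (1%:E <= y%:E)%E by rewrite lee_fin ltW.
  by case: (code_inj hA1 hA12 x1' y1' qx qy e).
- apply/subspace_continuousP => x Ax.
  apply/cvgrPdist_lt => e e0.
  case: x Ax => [s| |] Ax.
  + move: Ax; rewrite /from_subspace /= in_itv /= leey andbT lee_fin => s1.
    have hn := rr_near hA1 hA12 s1 e0.
    rewrite /within /=; apply/nbhs_EFin; near=> t => At.
    have t1 : 1 <= t by move: At; rewrite /= in_itv /= leey andbT lee_fin.
    rewrite !r0_fin //; move: t1; near: t; exact: hn.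
  + have [M [M1 hM]] := rr_inf hA1 hA12 e0.
    exists M; split; first exact: num_real.
    move=> y; rewrite /from_subspace; case: y => [t| |] My Ay.
    * rewrite lte_fin in My.
      have t1 : 1 <= t by rewrite (le_trans M1) // ltW.
      rewrite r0_inf // r0_fin //.
      have g1 := rr_gt_rinf hA1 hA12 t1; have g2 := hM t My.
      rewrite ltr0_norm ?subr_lt0 //; lra.
    * by rewrite subrr normr0.
    * by [].
  + by exfalso; move: Ax; rewrite /= in_itv /=.
- move=> a ha x ax B /nbhs_EFin /nbhs_ballP [d /= d0 hB].
  have x1 : 1 < x by exact: lt_trans ha ax.
  set d' := Num.min (d / 2) ((x - 1) / 2).
  have d'0 : 0 < d' by rewrite lt_min; apply/andP; split; lra.
  have d'1 : d' <= d / 2 by rewrite ge_min lexx.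
  have d'2 : d' <= (x - 1) / 2 by rewrite ge_min lexx orbT.
  set t1 := x - d'; set t2 := x + d'.
  have t11 : 1 < t1 by rewrite /t1; lra.
  have t12 : t1 < t2 by rewrite /t1 /t2; lra.
  set f := fun t => inf (ZZ A1 A2 t).
  have fdec : f t2 < f t1 by apply: rr_decr => //; exact: ltW.
  have [q] := rat_in_itvoo fdec; rewrite in_itv /= => /andP[q1 q2].
  have hc : {within `[t1, t2], continuous f}.
    apply: continuous_in_subspaceT => t; rewrite inE /= in_itv /= => /andP[tt1 _].
    by apply: rr_cont => //; exact: lt_le_trans t11 tt1.
  have hm : Num.min (f t1) (f t2) <= ratr q <= Num.max (f t1) (f t2).
    by rewrite ge_min le_max (ltW q1) (ltW q2) orbT.
  have [c cin fc] := IVT (ltW t12) hc hm.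
  move: cin; rewrite in_itv /= => /andP[c1 c2].
  have c1' : 1 <= c by rewrite ltW // (lt_le_trans t11).
  exists c%:E; split.
    split; first by rewrite lee_fin.
    by exists q; rewrite r0_fin.
  apply: hB; rewrite /ball /=.
  have : `|x - c| <= d'.
    by rewrite ler_norml; apply/andP; split; rewrite /t1 /t2 in c1 c2; lra.
  lra.
Unshelve. all: by end_near.
Qed.
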